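(* Let $\vec{\mathbf{e}}=(1,0)$, $\vec{\mathbf{f}}=(0,1)$. Let $E,E'$ be two copies of the flat plane $\mathbb{R}^2$. Let $\mathcal{S}$ be the family of marks on $E$ with endpoints $4n\vec{\mathbf{e}},(4n+1)\vec{\mathbf{e}}$ ($n\ge1$), $\mathcal{S}_{\mathrm{glue}}$ the family of marks on $E$ with endpoints $(4n+2)\vec{\mathbf{e}},(4n+3)\vec{\mathbf{e}}$ ($n\ge1$), $\mathcal{S}'$ the family of marks on $E'$ with endpoints $2n\vec{\mathbf{f}},2n\vec{\mathbf{f}}+\vec{\mathbf{e}}$ ($n\ge1$), and $\mathcal{S}'_{\mathrm{glue}}$ the family of marks on $E'$ with endpoints $(2n+1)\vec{\mathbf{f}},(2n+1)\vec{\mathbf{f}}+\vec{\mathbf{e}}$ ($n\ge 1$). Let $\hat{E}$ be the flat surface obtained from $E\sqcup E'$ by regluing along $\mathcal{S}_{\mathrm{glue}}$ and $\mathcal{S}'_{\mathrm{glue}}$; the families $\mathcal{S},\mathcal{S}'$ are inherited by $\hat{E}$. Let $g\in\mathbf{GL}_+(2,\mathbb{R})$ with $\|g\|\ge 1$, and let $\hat{E}_g$ be the surface obtained from $\hat{E}$ by post-composing every chart with $g$, with $\bar g:\hat E\to\hat E_g$ the canonical affine homeomorphism of derivative $g$. Then the distance in $\hat{E}_g$ between $\bar g(\bigcup\mathcal{S})$ and $\bar g(\bigcup\mathcal{S}')$ is at least $\frac{1}{\sqrt{2}}$.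
   Context: $\|g\|$ is the operator norm with respect to the Euclidean norm. A flat surface is a connected Riemann surface with a non-zero holomorphic $1$-form, carrying the induced translation atlas and flat metric. A mark is an oriented finite-length geodesic segment (with endpoints) avoiding singularities; in the plane it is determined by its endpoints, and its slope is its holonomy vector. Regluing along two disjoint marks $m,m'$ of equal slope: cut along $m$ and $m'$, obtaining four boundary segments, and reglue each side of the cut along $m$ to the opposite side of the cut along $m'$ by translation. For two sequences $(m_n),(m'_n)$ of disjoint non-accumulating marks with $m_n,m'_n$ of equal slope, regluing along them means regluing successively along $m_n,m'_n$ for all $n$ (in the limit). Marks disjoint from those used in a regluing are inherited by the resulting surface. Distances are measured in the flat (path) metric. *)

(* Defs.v *)
From HB Require Import structures.
From mathcomp Require Import all_boot all_order all_algebra.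
From mathcomp Require Import all_classical all_reals all_analysis.
Set Implicit Arguments. Unset Strict Implicit. Unset Printing Implicit Defensive.
Import Order.TTheory GRing.Theory Num.Theory.
Local Open Scope classical_set_scope.
Local Open Scope ring_scope.

(* Concrete model of the flat surface \hat E.
   A point of E ⊔ E' is a pair (s, p): s = false for E, s = true for E',
   p in R^2 represented as R * R. *)

Definition enorm (R : realType) (v : R * R) : R := Num.sqrt (v.1 ^+ 2 + v.2 ^+ 2).

Definition gapp (R : realType) (g : 'M[R]_2) (v : R * R) : R * R :=
  (g ord0 ord0 * v.1 + g ord0 ord_max * v.2,
   g ord_max ord0 * v.1 + g ord_max ord_max * v.2).

Definition opnorm (R : realType) (g : 'M[R]_2) : R :=
  sup [set enorm (gapp g v) | v in [set v : R * R | enorm v = 1]].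

(* Gluing slits (marks of S_glue on E and S'_glue on E'), n >= 1:
   sheet E  (false): from (4n+2, 0)  to (4n+3, 0)
   sheet E' (true) : from (0, 2n+1)  to (1, 2n+1)
   Each is [glue_left, glue_left + 1] x {glue_height}. *)
Definition glue_height (R : realType) (s : bool) (n : nat) : R :=
  if s then (2 * n + 1)%:R else 0.
Definition glue_left (R : realType) (s : bool) (n : nat) : R :=
  if s then 0 else (4 * n + 2)%:R.

Definition on_glue_interior (R : realType) (s : bool) (p : R * R) (n : nat) : Prop :=
  (1 <= n)%N /\ p.2 = glue_height R s n /\
  glue_left R s n < p.1 < glue_left R s n + 1.

Definition in_glue_interior (R : realType) (s : bool) (p : R * R) : Prop :=
  exists n, on_glue_interior s p n.

(* translation carrying the n-th slit of sheet s onto the n-th slit of the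
   other sheet (the regluing identification) *)
Definition transfer (R : realType) (s : bool) (n : nat) (p : R * R) : R * R :=
  (p.1 - glue_left R s n + glue_left R (~~ s) n,
   p.2 - glue_height R s n + glue_height R (~~ s) n).

Record leg (R : realType) := Leg { lsheet : bool; lsrc : R * R; ldst : R * R }.

Definition seg_point (R : realType) (p q : R * R) (t : R) : R * R :=
  (p.1 + t * (q.1 - p.1), p.2 + t * (q.2 - p.2)).

(* a leg is a genuine segment of the cut surface: its open part does not
   meet (cross) the interior of a gluing slit *)
Definition leg_ok (R : realType) (L : leg R) : Prop :=
  forall t : R, 0 < t < 1 -> ~ in_glue_interior (lsheet L) (seg_point (lsrc L) (ldst L) t).

Definition junction_ok (R : realType) (L1 L2 : leg R) : Prop :=
  let s1 := lsheet L1 in let s2 := lsheet L2 in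
  let p1 := lsrc L1 in let q1 := ldst L1 in
  let p2 := lsrc L2 in let q2 := ldst L2 in
  (s2 = s1 /\ p2 = q1 /\
    (~ in_glue_interior s1 q1 \/
     exists n, on_glue_interior s1 q1 n /\
       (* at a slit interior point, stay on the same side of the cut *)
       ((p1.2 < glue_height R s1 n /\ q2.2 < glue_height R s1 n) \/
        (glue_height R s1 n < p1.2 /\ glue_height R s1 n < q2.2))))
  \/
  (s2 = ~~ s1 /\ exists n, (1 <= n)%N /\ q1.2 = glue_height R s1 n /\
     glue_left R s1 n <= q1.1 <= glue_left R s1 n + 1 /\
     p2 = transfer s1 n q1 /\
     (* either at a slit endpoint (cone point), or at an interior point, where
        each side of one cut is glued to the opposite side of the other cut *)
     (q1.1 = glue_left R s1 n \/ q1.1 = glue_left R s1 n + 1 \/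
      (p1.2 < glue_height R s1 n /\ glue_height R s2 n < q2.2) \/
      (glue_height R s1 n < p1.2 /\ q2.2 < glue_height R s2 n))).

(* a polygonal path of \hat E: first leg L, remaining legs Ls *)
Fixpoint chain_ok (R : realType) (L : leg R) (Ls : seq (leg R)) : Prop :=
  leg_ok L /\
  match Ls with
  | [::] => True
  | L2 :: Ls' => junction_ok L L2 /\ chain_ok L2 Ls'
  end.

(* length of the path in \hat E_g (charts post-composed with g) *)
Definition chain_length (R : realType) (g : 'M[R]_2) (L : leg R) (Ls : seq (leg R)) : R :=
  \sum_(M <- L :: Ls) enorm (gapp g (ldst M - lsrc M)).

Definition chain_from_to (R : realType) (A B : set (bool * (R * R)))
  (L : leg R) (Ls : seq (leg R)) : Prop :=
  chain_ok L Ls /\ A (lsheet L, lsrc L) /\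
  B (lsheet (last L Ls), ldst (last L Ls)).

(* distance in \hat E_g between (the images under \bar g of) A and B *)
Definition hat_dist (R : realType) (g : 'M[R]_2) (A B : set (bool * (R * R))) : \bar R :=
  ereal_inf [set (chain_length g c.1 c.2)%:E |
             c in [set c : leg R * seq (leg R) | chain_from_to A B c.1 c.2]].

Definition marksS (R : realType) : set (bool * (R * R)) :=
  [set x | x.1 = false /\ exists n : nat, (1 <= n)%N /\ x.2.2 = 0 /\
           (4 * n)%:R <= x.2.1 <= (4 * n + 1)%:R].

Definition marksS' (R : realType) : set (bool * (R * R)) :=
  [set x | x.1 = true /\ exists n : nat, (1 <= n)%N /\ x.2.2 = (2 * n)%:R /\
           0 <= x.2.1 <= 1].

(* Main.v *)
Require Import Defs.
From HB Require Import structures.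
From mathcomp Require Import all_boot all_order all_algebra.
From mathcomp Require Import all_classical all_reals all_analysis.
From mathcomp Require Import ring lra zify.
Import Order.TTheory GRing.Theory Num.Theory.
Local Open Scope ring_scope.

Section Aux.
Variable R : realType.
Implicit Types (v w p q r : R * R) (g : 'M[R]_2).

Lemma en_ge0 v : 0 <= enorm v.
Proof. exact: sqrtr_ge0. Qed.

Lemma en_sq v : enorm v ^+ 2 = v.1 ^+ 2 + v.2 ^+ 2.
Proof. by rewrite /enorm sqr_sqrtr // addr_ge0 // sqr_ge0. Qed.

Lemma le_sqrt_of (x y : R) : 0 <= x -> x ^+ 2 <= y -> x <= Num.sqrt y.
Proof.
move=> x0 xy; have := ler_wsqrtr xy; by rewrite sqrtr_sqr ger0_norm.
Qed.

Lemma sq_le (x y : R) : 0 <= y -> x ^+ 2 <= y ^+ 2 -> x <= y.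
Proof. move=> y0 h; have := @le_sqrt_of `|x| (y ^+ 2) (normr_ge0 x).
rewrite real_normK ?num_real // => /(_ h); rewrite sqrtr_sqr (ger0_norm y0).
by move=> h2; exact: le_trans (ler_norm x) h2. Qed.

Lemma aux_tri (a b c d x y : R) : x^+2 = a^+2+b^+2 -> y^+2 = c^+2+d^+2 ->
  a*c+b*d <= x*y -> (a+c)^+2+(b+d)^+2 <= (x+y)^+2.
Proof. move=> h1 h2 h3. nra. Qed.

Lemma en_tri v w : enorm (v + w) <= enorm v + enorm w.
Proof.
case: v => a b; case: w => c d.
apply: sq_le; first by rewrite addr_ge0 // en_ge0.
have h1 := en_sq (a, b); have h2 := en_sq (c, d); have h3 := en_sq ((a, b) + (c, d)).
have p1 := en_ge0 (a, b); have p2 := en_ge0 (c, d).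
have cs : a * c + b * d <= enorm (a, b) * enorm (c, d).
  apply: sq_le; first by rewrite mulr_ge0.
  rewrite exprMn h1 h2 /=. have := sqr_ge0 (a * d - b * c). nra.
rewrite h3 /=; exact: aux_tri h1 h2 cs.
Qed.

Lemma en_scale (k a b : R) : enorm (k * a, k * b) = `|k| * enorm (a, b).
Proof.
rewrite /enorm /= !exprMn -mulrDr sqrtrM ?sqr_ge0 // sqrtr_sqr //.
Qed.

Lemma pairD (x y z w : R) : (x, y) + (z, w) = (x + z, y + w).
Proof. by []. Qed.

Definition gp (g : 'M[R]_2) := gapp g.

Lemma gapp_add g v w : gapp g (v + w) = gapp g v + gapp g w.
Proof. case: v => a b; case: w => c d; rewrite /gapp /= pairD; congr pair; ring. Qed.

Lemma gapp0 g : gapp g 0 = 0.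
Proof. rewrite /gapp /=. have -> : (0 : R * R) = (0, 0) by []. rewrite /= !mulr0 !addr0 //. Qed.

Lemma en0 : enorm (0 : R * R) = 0.
Proof. have -> : (0 : R * R) = (0, 0) by []. by rewrite /enorm /= expr0n /= addr0 sqrtr0. Qed.

Lemma gtri g p q r : enorm (gapp g (p - r)) <= enorm (gapp g (q - r)) + enorm (gapp g (p - q)).
Proof.
have -> : p - r = (q - r) + (p - q) by rewrite [RHS]addrC addrA subrK.
by rewrite gapp_add en_tri.
Qed.

Lemma gen0 g p : enorm (gapp g (p - p)) = 0.
Proof. by rewrite subrr gapp0 en0. Qed.


Lemma sum_le_sqrt2 (x y : R) : x ^+ 2 + y ^+ 2 = 1 -> `|x| + `|y| <= Num.sqrt 2.
Proof.
move=> h; apply: le_sqrt_of; first by rewrite addr_ge0.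
have hx := real_normK (num_real x); have hy := real_normK (num_real y).
have := sqr_ge0 (`|x| - `|y|). nra.
Qed.

Lemma key g t : `|t| <= 1 -> 1 <= opnorm g ->
  (Num.sqrt 2)^-1 <= enorm (gapp g (1,0)) + enorm (gapp g (t,1)).
Proof.
set u := gapp g (1,0); set w := gapp g (t,1).
have s2 : 0 < Num.sqrt (2 : R) by rewrite sqrtr_gt0.
move=> ht h1.
have hsup : opnorm g <= Num.sqrt 2 * (enorm u + enorm w).
  apply: ge_sup.
    exists (enorm (gapp g (1,0))); exists (1,0) => //.
    by rewrite /enorm /= expr1n expr0n /= addr0 sqrtr1.
  move=> x [[v1 v2] hv <-].
  have e : gapp g (v1,v2) = ((v1 - t*v2) * u.1, (v1 - t*v2)*u.2) + (v2 * w.1, v2 * w.2).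
    rewrite pairD /u /w /gapp /=; congr pair; ring.
  rewrite e; apply: le_trans (en_tri _ _) _.
  rewrite !en_scale -!surjective_pairing.
  have hv2 : v1 ^+ 2 + v2 ^+ 2 = 1 by rewrite -(en_sq (v1, v2)) hv expr1n.
  have hs := @sum_le_sqrt2 v1 v2 hv2.
  have A : `|v1 - t * v2| <= Num.sqrt 2.
    apply: le_trans (ler_normB _ _) _; rewrite normrM.
    have := normr_ge0 v2; have := normr_ge0 t; have := normr_ge0 v1. nra.
  have B : `|v2| <= Num.sqrt 2 by have := normr_ge0 v1; lra.
  have := ler_wpM2r (en_ge0 u) A; have := ler_wpM2r (en_ge0 w) B.
  rewrite /= => C D; lra.
rewrite -[_^-1]mulr1 ler_pdivrMl //; exact: le_trans h1 hsup.
Qed.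

Lemma key2 g v : `|v.1| <= 1 -> 1 <= `|v.2| -> 1 <= opnorm g ->
  (Num.sqrt 2)^-1 <= enorm (gapp g (1,0)) + enorm (gapp g v).
Proof.
case: v => c d /= hc hd h1.
have d0 : d != 0 by apply/eqP => d0; move: hd; rewrite d0 normr0; lra.
have dp : 0 < `|d| by rewrite normr_gt0.
have ht : `|c / d| <= 1.
  by rewrite normrM normfV ler_pdivrMr // mul1r; lra.
have := @key g (c / d) ht h1.
set w := gapp g (c / d, 1).
have e : gapp g (c, d) = (d * w.1, d * w.2).
  rewrite /w /gapp /=; congr pair; field; exact: d0.
rewrite e en_scale -surjective_pairing.
have := en_ge0 w; nra.
Qed.

Lemma key1 g v : 1 <= `|v.1| -> v.2 = 0 ->
  enorm (gapp g (1,0)) <= enorm (gapp g v).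
Proof.
case: v => a b /= ha ->.
set u := gapp g (1,0).
have e : gapp g (a, 0) = (a * u.1, a * u.2).
  rewrite /u /gapp /=; congr pair; ring.
rewrite e en_scale -surjective_pairing.
have := en_ge0 u; nra.
Qed.


Lemma nat_gap (a b : nat) : a <> b -> 1 <= `|a%:R - b%:R : R|.
Proof.
move=> ab; case: (ltngtP a b) => h.
- have : (a + 1)%:R <= b%:R :> R by rewrite ler_nat addn1.
  rewrite natrD ler_normr => ?; apply/orP; right; lra.
- have : (b + 1)%:R <= a%:R :> R by rewrite ler_nat addn1.
  rewrite natrD ler_normr => ?; apply/orP; left; lra.
- by [].
Qed.

Lemma cl_cons g L L2 Ls : chain_length g L (L2 :: Ls) =
  enorm (gapp g (ldst L - lsrc L)) + chain_length g L2 Ls.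
Proof. by rewrite /chain_length big_cons. Qed.

Lemma cl_nil g L : chain_length g L [::] = enorm (gapp g (ldst L - lsrc L)).
Proof. by rewrite /chain_length big_cons big_nil addr0. Qed.

Lemma cl_ge0 g L Ls : 0 <= chain_length g L Ls.
Proof. rewrite /chain_length; apply: sumr_ge0 => M _; exact: en_ge0. Qed.

Lemma claim2 g : 1 <= opnorm g -> forall Ls (L : leg R) (p1 : R * R),
  chain_ok L Ls -> marksS' (lsheet (last L Ls), ldst (last L Ls)) ->
  (lsheet L -> exists m : nat, p1.2 = (2 * m + 1)%:R /\ 0 <= p1.1 <= 1) ->
  (Num.sqrt 2)^-1 <= enorm (gapp g (1,0)) +
    ((if lsheet L then enorm (gapp g (lsrc L - p1)) else 0) + chain_length g L Ls).
Proof.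
move=> hg; elim=> [|L2 Ls IH] L p1 /=.
  move=> _ [hs [n [n1 [hy hx]]]] hp; rewrite cl_nil.
  move: hs hp; rewrite /=; case: (lsheet L) => // _ /(_ isT) [m [py px]].
  have := @key2 g (ldst L - p1) _ _ hg.
  have h1 : `|(ldst L - p1).1| <= 1.
    rewrite ler_norml /=; move: hx px => /= /andP[? ?] /andP[? ?]; apply/andP; split; lra.
  have h2 : 1 <= `|(ldst L - p1).2|.
    rewrite /= hy py; apply: nat_gap; lia.
  move=> /(_ h1 h2) K; have T := gtri g (ldst L) (lsrc L) p1; lra.
move=> [_ [J C]] hB hp; rewrite cl_cons.
have e0 := en_ge0 (gapp g (ldst L - lsrc L)); have c0 := cl_ge0 g L2 Ls.
case: J => [[hs [hsrc _]] | [hs [n [n1 [hy [hx [hsrc _]]]]]]].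
- case hL: (lsheet L).
  + have hp2 : lsheet L2 -> exists m : nat, p1.2 = (2 * m + 1)%:R /\ 0 <= p1.1 <= 1 by rewrite hs.
    have H := IH L2 p1 C hB hp2.
    rewrite hs hL /= hsrc in H. have T := gtri g (ldst L) (lsrc L) p1. lra.
  + have hp2 : lsheet L2 -> exists m : nat, p1.2 = (2 * m + 1)%:R /\ 0 <= p1.1 <= 1 by rewrite hs hL.
    have H := IH L2 p1 C hB hp2.
    rewrite hs hL /= in H. lra.
- case hL: (lsheet L).
  + have hp2 : lsheet L2 -> exists m : nat, p1.2 = (2 * m + 1)%:R /\ 0 <= p1.1 <= 1 by rewrite hs hL.
    have H := IH L2 p1 C hB hp2.
    rewrite hs hL /= in H. have := en_ge0 (gapp g (lsrc L - p1)). lra.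
  + have hp2 : lsheet L2 -> exists m : nat, (lsrc L2).2 = (2 * m + 1)%:R /\ 0 <= (lsrc L2).1 <= 1.
      move=> _; exists n; rewrite hsrc hL /transfer /=.
      rewrite hL /= in hy hx; rewrite hy subr0 add0r; split => //.
      move: hx => /andP[? ?]; apply/andP; split; lra.
    have H := IH L2 (lsrc L2) C hB hp2.
    rewrite hs hL /= gen0 in H. lra.
Qed.


Lemma claim1 g : 1 <= opnorm g -> forall Ls (L : leg R) (p0 : R * R),
  chain_ok L Ls -> lsheet L = false ->
  marksS' (lsheet (last L Ls), ldst (last L Ls)) ->
  (exists n : nat, (1 <= n)%N /\ p0.2 = 0 /\ (4 * n)%:R <= p0.1 <= (4 * n + 1)%:R) ->
  (Num.sqrt 2)^-1 <= enorm (gapp g (lsrc L - p0)) + chain_length g L Ls.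
Proof.
move=> hg; elim=> [|L2 Ls IH] L p0 /=.
  by move=> _ hL [hs _]; rewrite /= hL in hs.
move=> [_ [J C]] hL hB hp; rewrite cl_cons.
have e0 := en_ge0 (gapp g (ldst L - lsrc L)); have c0 := cl_ge0 g L2 Ls.
have T := gtri g (ldst L) (lsrc L) p0.
case: J => [[hs [hsrc _]] | [hs [n [n1 [hy [hx [hsrc _]]]]]]].
  have H := IH L2 p0 C (etrans hs hL) hB hp.
  rewrite hsrc in H; lra.
rewrite hL /= in hy hx hs.
have hp2 : lsheet L2 -> exists m : nat, (lsrc L2).2 = (2 * m + 1)%:R /\ 0 <= (lsrc L2).1 <= 1.
  move=> _; exists n; rewrite hsrc hL /transfer /=.
  rewrite hy subr0 add0r; split => //.
  move: hx => /andP[? ?]; apply/andP; split; lra.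
have H := @claim2 g hg _ _ _ C hB hp2.
rewrite hs /= gen0 in H.
case: hp => [n0 [n01 [py /andP[px1 px2]]]].
move: hx => /andP[hx1 hx2].
have K := @key1 g (ldst L - p0).
have h1 : 1 <= `|(ldst L - p0).1|.
  rewrite /= ler_normr; clear -px1 px2 hx1 hx2; case: (leqP n0 n) => hn.
    have : (4 * n0 + 1 + 1)%:R <= (4 * n + 2)%:R :> R by rewrite ler_nat; lia.
    rewrite natrD => ?; apply/orP; left; lra.
  have : (4 * n + 2 + 1 + 1)%:R <= (4 * n0)%:R :> R by rewrite ler_nat; lia.
  rewrite !natrD => ?; apply/orP; right.
  have : (4 * n + 2 + 1)%:R = (4 * n + 2)%:R + 1 :> R by rewrite natrD.
  lra.
have h2 : (ldst L - p0).2 = 0 by rewrite /= hy py subrr.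
have := K h1 h2; clear -H T e0 c0; lra.
Qed.

End Aux.

Theorem lemma4p5 (R : realType) (g : 'M[R]_2) :
  0 < \det g -> 1 <= opnorm g ->
  (((Num.sqrt (2 : R))^-1)%:E <= hat_dist g (@marksS R) (@marksS' R))%E.
Proof.
move=> _ hg; apply/ereal_infP => y [[L Ls] [Hok [HA HB]] <-] /=.
rewrite lee_fin.
case: HA => /= hL [n [n1 [py px]]].
have := @claim1 R g hg _ _ (lsrc L) Hok hL HB.
rewrite /= gen0 add0r; apply; by exists n.
Qed.
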